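(* Let $X$ be a smooth toric variety with fan $\Sigma$, let $\sigma\in\Sigma$ be a $2$-dimensional cone with $\sigma(1)=\{\rho_1,\rho_2\}$, and let $X'$ be the toric variety of the star subdivision $\Sigma'$ of $\Sigma$ relative to $\sigma$ (the blow-up of $X$ along $\overline{O_\sigma}$), with $E$ the $T$-invariant prime divisor of the new ray generated by $v_\sigma=v_{\rho_1}+v_{\rho_2}$. Let $F(x,y)=x+y-vxy$ with $v\in R$. Let $\pi_*: R\llbracket \mathrm{CDiv}_T(X') \rrbracket_F/I_{\Sigma'} \to R\llbracket \mathrm{CDiv}_T(X) \rrbracket_F/I_\Sigma$ be a homomorphism of $R\llbracket \mathrm{CDiv}_T(X) \rrbracket_F/I_\Sigma$-modules (the source being a module via $\pi^*$) such that $\pi_*(1)=1$ and $\pi_*(x_{D_{\rho,\Sigma'}})=x_{D_{\rho,\Sigma}}$ for every $\rho\in\Sigma(1)$. Write $x_i$ for both $x_{D_{\rho_i,\Sigma'}}$ and $x_{D_{\rho_i,\Sigma}}$, $i=1,2$. Then \[ \pi_*(x_E)=v\,x_1x_2,\qquad \pi_*(x_E^n)=v\sum_{i=1}^{n}x_1^{n+1-i}x_2^i-\sum_{i=1}^{n-1}x_1^{n-i}x_2^i \ (n\geq 2), \] \[ \pi_*(x_a^s x_E^t)=x_a\,x_b^t\,(x_a-_F x_b)^{s-1}\quad (s\geq1,\ t\geq0,\ \{a,b\}=\{1,2\}). \]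
   Context: Let $R$ be a commutative ring and $F$ a one-dimensional commutative formal group law over $R$; write $x+_F y=F(x,y)$ and $x-_F y = x+_F \chi(y)$ where $\chi$ is the formal inverse. For an abelian group $M$, the formal group ring $R\llbracket M\rrbracket_F$ is the quotient of the completion of $R[x_\lambda:\lambda\in M]$ at the kernel of the augmentation $x_\lambda\mapsto0$ by the closure of the ideal generated by $x_0$ and $x_{\lambda+\mu}-(x_\lambda+_F x_\mu)$; classes are denoted $x_\lambda$. $T$ is a split torus with cocharacter lattice $T_*$. A smooth toric variety $X$ has fan $\Sigma$ in $T_*$; $\Sigma(1)$ its rays, $\theta(1)$ the rays of a cone $\theta$, $v_\rho$ the primitive generator of $\rho$. For a fan $\Delta$ with toric variety $Y$, $\mathrm{CDiv}_T(Y)=\bigoplus_{\rho\in\Delta(1)}\mathbb{Z}D_{\rho,\Delta}$ (free on $T$-invariant prime divisors), and $I_\Delta$ is the ideal of $R\llbracket\mathrm{CDiv}_T(Y)\rrbracket_F$ generated by $\prod_{\rho\in S}x_{D_{\rho,\Delta}}$ over all $S\subseteq\Delta(1)$ with $S\not\subseteq\theta(1)$ for every cone $\theta\in\Delta$. The star subdivision of $\Sigma$ relative to $\sigma$ is $\Sigma'=\{\theta\in\Sigma:\sigma\not\subseteq\theta\}\cup\bigcup_{\sigma\subseteq\theta}\{\mathrm{cone}(S): S\subseteq\{v_\sigma\}\cup\{v_\rho:\rho\in\theta(1)\},\ \{v_\rho:\rho\in\sigma(1)\}\not\subseteq S\}$, where $v_\sigma=\sum_{\rho\in\sigma(1)}v_\rho$;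 thus $\Sigma'(1)=\Sigma(1)\cup\{\widetilde\rho\}$ with $\widetilde\rho$ generated by $v_\sigma$, $E=D_{\widetilde\rho,\Sigma'}$, and $\mathrm{CDiv}_T(X')=\mathrm{CDiv}_T(X)\oplus\mathbb{Z}E$. The pull-back $\pi^*: R\llbracket\mathrm{CDiv}_T(X)\rrbracket_F/I_\Sigma\to R\llbracket\mathrm{CDiv}_T(X')\rrbracket_F/I_{\Sigma'}$ is the $R$-algebra homomorphism with $x_{D_{\rho,\Sigma}}\mapsto x_{D_{\rho,\Sigma'}}$ if $\rho\notin\sigma(1)$ and $x_{D_{\rho,\Sigma}}\mapsto x_{D_{\rho,\Sigma'}+E}=x_{D_{\rho,\Sigma'}}+_F x_E$ if $\rho\in\sigma(1)$. *)

(* Defs.v *)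
From HB Require Import structures.
From mathcomp Require Import all_boot all_algebra.
From mathcomp Require Import boolp.
From mathcomp Require Import mpoly.
Set Implicit Arguments. Unset Strict Implicit. Unset Printing Implicit Defensive.
Import GRing.Theory.
Local Open Scope ring_scope.

(* A series is its coefficient function on monomials 'X_{1..n}; the product   *)
(* is the Cauchy product (computed through polynomial truncations).           *)
(* For a free abelian group M with basis e_0..e_{n-1} the formal group ring    *)
(* R[[M]]_F is (canonically) this power series ring, with x_{e_i} = x_i.       *)

Section PS.

Variables (R : comNzRingType) (n : nat).

Record ps := PS { pscoef : 'X_{1..n} -> R }.

HB.instance Definition _ := gen_eqMixin ps.
HB.instance Definition _ := gen_choiceMixin ps.

Lemma psP (f g : ps) : (forall m, pscoef f m = pscoef g m) -> f = g.
Proof. by case: f; case: g => f g /= H; congr PS; apply: funext. Qed.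

Definition ps0 := PS (fun _ => 0).
Definition psopp f := PS (fun m => - pscoef f m).
Definition psadd f g := PS (fun m => pscoef f m + pscoef g m).

Lemma psaddA : associative psadd.
Proof. by move=> f g h; apply: psP => m /=; rewrite addrA. Qed.
Lemma psaddC : commutative psadd.
Proof. by move=> f g; apply: psP => m /=; rewrite addrC. Qed.
Lemma psadd0 : left_id ps0 psadd.
Proof. by move=> f; apply: psP => m /=; rewrite add0r. Qed.
Lemma psaddN : left_inverse ps0 psopp psadd.
Proof. by move=> f; apply: psP => m /=; rewrite addNr. Qed.

HB.instance Definition _ := GRing.isZmodule.Build ps psaddA psaddC psadd0 psaddN.

Definition pstrunc (d : nat) (f : ps) : {mpoly R[n]} :=
  \sum_(m : 'X_{1..n < d}) pscoef f m *: 'X_[m].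

Lemma pstruncE d f m :
  (pstrunc d f)@_m = if (mdeg m < d)%N then pscoef f m else 0.
Proof.
case: ifP => [lt|ge]; first exact: mcoeff_mpoly.
rewrite /pstrunc raddf_sum big1 // => k _ /=; rewrite mcoeffZ mcoeffX.
case: eqP => [e|]; last by rewrite mulr0.
by have := bmdeg k; rewrite e ge.
Qed.

Definition ps1 := PS (fun m => (m == 0%MM)%:R).
Definition psmul f g :=
  PS (fun m => (pstrunc (mdeg m).+1 f * pstrunc (mdeg m).+1 g)@_m).

Lemma mcoeffM_local (p p' q q' : {mpoly R[n]}) m :
  (forall k, (mdeg k <= mdeg m)%N -> p@_k = p'@_k) ->
  (forall k, (mdeg k <= mdeg m)%N -> q@_k = q'@_k) ->
  (p * q)@_m = (p' * q')@_m.
Proof.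
move=> Hp Hq; rewrite !mcoeffM; apply: eq_bigr => k /eqP E.
have D : mdeg m = (mdeg k.1 + mdeg k.2)%N by rewrite -mdegD -E.
have L1 : forall a b c : nat, c = (a + b)%N -> (a <= c)%N by move=> a b c ->; exact: leq_addr.
have L2 : forall a b c : nat, c = (a + b)%N -> (b <= c)%N by move=> a b c ->; exact: leq_addl.
by rewrite Hp ?Hq //; [exact: L2 D | exact: L1 D].
Qed.

Lemma psmulE f g m d : (mdeg m < d)%N ->
  pscoef (psmul f g) m = (pstrunc d f * pstrunc d g)@_m.
Proof.
move=> lt; apply: mcoeffM_local => k le; rewrite !pstruncE ltnS le.
  by rewrite (leq_ltn_trans le lt).
by rewrite (leq_ltn_trans le lt).
Qed.

Lemma pstrunc_mul f g d :
  forall k, (mdeg k < d)%N -> (pstrunc d (psmul f g))@_k = (pstrunc d f * pstrunc d g)@_k.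
Proof. by move=> k lt; rewrite pstruncE lt (psmulE _ _ lt). Qed.

Lemma psmulA : associative psmul.
Proof.
move=> f g h; apply: psP => m; set d := (mdeg m).+1.
rewrite !(@psmulE _ _ m d) //.
transitivity ((pstrunc d f * (pstrunc d g * pstrunc d h))@_m).
  by apply: mcoeffM_local => // k le; rewrite pstrunc_mul // ltnS.
rewrite mulrA; apply: mcoeffM_local => // k le.
by rewrite pstrunc_mul // ltnS.
Qed.

Lemma psmulC : commutative psmul.
Proof. by move=> f g; apply: psP => m /=; rewrite mulrC. Qed.

Lemma pstrunc1 d : (0 < d)%N -> pstrunc d ps1 = 1.
Proof.
move=> d0; apply/mpolyP => m; rewrite pstruncE mcoeff1 /=.
case: ifP => // /negbT; rewrite -leqNgt => le.
case: eqP => // e; move: le; rewrite e mdeg0 leqn0 => /eqP d00.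
by move: d0; rewrite d00.
Qed.

Lemma psmul1 : left_id ps1 psmul.
Proof.
move=> f; apply: psP => m /=; rewrite pstrunc1 // mul1r pstruncE ltnSn //.
Qed.

Lemma pstruncD d f g : pstrunc d (psadd f g) = pstrunc d f + pstrunc d g.
Proof. by apply/mpolyP => m; rewrite mcoeffD !pstruncE; case: ifP; rewrite ?addr0. Qed.

Lemma psmulDl : left_distributive psmul psadd.
Proof. by move=> f g h; apply: psP => m /=; rewrite pstruncD mulrDl mcoeffD. Qed.

Lemma ps1_neq0 : ps1 != 0.
Proof.
apply/eqP => /(congr1 (fun f => pscoef f 0%MM)) /=; rewrite eqxx.
by move/eqP; rewrite oner_eq0.
Qed.

HB.instance Definition _ := GRing.Zmodule_isComNzRing.Build ps psmulA psmulC psmul1 psmulDl ps1_neq0.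

End PS.

Arguments PS {R n}.
Arguments pscoef {R n}.

Section PSops.
Variable R : comNzRingType.

Definition psC n (c : R) : ps R n := PS (fun m => if m == 0%MM then c else 0).

Definition psX n (i : 'I_n) : ps R n := PS (fun m => (m == U_(i)%MM)%:R).

(* substitution  a(x_0,...,x_{n-1}) |-> a(phi 0, ..., phi (n-1)), meaningful  *)
(* (continuous R-algebra homomorphism) when every phi i has zero constant term *)
Definition ps_subst n k (phi : 'I_n -> ps R k) (a : ps R n) : ps R k :=
  PS (fun m =>
    (\sum_(j : 'X_{1..n < (mdeg m).+1})
        pscoef a j *: \prod_(i < n) (pstrunc (mdeg m).+1 (phi i)) ^+ (j i))@_m).

Definition fgl_add (v : R) n (x y : ps R n) : ps R n := x + y - psC n v * x * y.

(* Its formal inverse chi(t) = - t / (1 - v t) = - sum_{k >= 0} v^k t^(k+1),   *)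
Definition fgl_inv_series (v : R) : ps R 1 :=
  PS (fun m => if mdeg m == 0%N then 0 else - v ^+ (mdeg m).-1).

Definition fgl_inv (v : R) n (y : ps R n) : ps R n :=
  ps_subst (fun _ => y) (fgl_inv_series v).
Definition fgl_sub (v : R) n (x y : ps R n) : ps R n :=
  fgl_add v x (fgl_inv v y).

(* Stanley-Reisner type ideal I_Delta of R[[CDiv_T(Y)]]_F : generated by the  *)
(* products prod_{rho in S} x_rho for S not contained in the ray set of any    *)
(* cone of Delta.  A cone of a smooth fan is identified with its ray set.     *)
Definition nonface n (cones : {set {set 'I_n}}) (S : {set 'I_n}) : bool :=
  [forall th in cones, ~~ (S \subset th)].

Definition in_ideal n (cones : {set {set 'I_n}}) (f : ps R n) : Prop :=
  exists c : {set 'I_n} -> ps R n,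
    f = \sum_(S : {set 'I_n} | nonface cones S) c S * \prod_(i in S) psX i.

(* congruence modulo I_Delta, i.e. equality in R[[CDiv_T(Y)]]_F / I_Delta *)
Definition eqmod n (cones : {set {set 'I_n}}) (f g : ps R n) : Prop :=
  in_ideal cones (f - g).

End PSops.
Arguments psX {R n}.

(* Smooth fans in T_* = Z^d.  Rays are indexed by 'I_N, with primitive         *)
(* generators vr : 'I_N -> 'rV[int]_d; a cone theta is recorded by its ray set *)
(* theta(1) (theta = cone(v_rho : rho in theta(1))).                            *)

Definition in_cone d N (vr : 'I_N -> 'rV[int]_d) (S : {set 'I_N}) (x : 'rV[rat]_d) :
  Prop :=
  exists c : 'I_N -> rat,
    [/\ forall i, 0 <= c i, forall i, i \notin S -> c i = 0 &
        x = \sum_(i < N) c i *: map_mx (fun z : int => z%:~R) (vr i)].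

Definition smooth_fan d N (vr : 'I_N -> 'rV[int]_d) (cones : {set {set 'I_N}}) : Prop :=
  [/\ (* every index is a ray of the fan: Sigma(1) = 'I_N *)
      forall i, [set i] \in cones,
      forall S T : {set 'I_N}, S \in cones -> T \subset S -> T \in cones,
      (* smoothness: generators of each cone are part of a Z-basis of Z^d *)
      forall S : {set 'I_N}, S \in cones -> exists2 M : 'M[int]_d, M \in unitmx &
        exists2 g : 'I_N -> 'I_d, {in S &, injective g} &
          forall i, i \in S -> row (g i) M = vr i &
      (* two cones intersect in a common face *)
      forall S T : {set 'I_N}, S \in cones -> T \in cones -> forall x,
        in_cone vr S x -> in_cone vr T x -> in_cone vr (S :&: T) x].

(* rays of Sigma viewed as rays of the star subdivision Sigma' (whose rays are *)
(* 'I_N.+1, the new ray tilde-rho generated by v_sigma being ord_max)         *)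
Definition old_ray N (i : 'I_N) : 'I_N.+1 := widen_ord (leqnSn N) i.
Definition new_ray N : 'I_N.+1 := ord_max.

Definition star_cones N (cones : {set {set 'I_N}}) (sigma : {set 'I_N}) :
  {set {set 'I_N.+1}} :=
  [set S' : {set 'I_N.+1} | [exists th in cones,
     (~~ (sigma \subset th) && (S' == @old_ray N @: th))
  || [&& sigma \subset th, S' \subset new_ray N |: (@old_ray N @: th)
       & ~~ (@old_ray N @: sigma \subset S')]]].

Definition pullback (R : comNzRingType) (v : R) N (sigma : {set 'I_N})
  (a : ps R N) : ps R N.+1 :=
  ps_subst (fun i : 'I_N => if i \in sigma then
                              fgl_add v (psX (old_ray i)) (psX (new_ray N))
                            else psX (old_ray i)) a.

(* Main.v *)
Require Import Defs.
From HB Require Import structures.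
From mathcomp Require Import all_boot all_algebra.
From mathcomp Require Import boolp.
From mathcomp Require Import mpoly.
From mathcomp Require Import zify ring.
Set Implicit Arguments. Unset Strict Implicit. Unset Printing Implicit Defensive.
Import GRing.Theory.
Local Open Scope ring_scope.


Section Low.
Variables (R : comNzRingType) (k : nat).
Implicit Types (p q : {mpoly R[k]}).
Definition low D p := forall m : 'X_{1..k}, (mdeg m < D)%N -> p@_m = 0.
Definition agree D p q := forall m : 'X_{1..k}, (mdeg m < D)%N -> p@_m = q@_m.

Lemma lowM a b p q : low a p -> low b q -> low (a + b) (p * q).
Proof.
move=> hp hq m lt; rewrite mcoeffM big1 // => kk /eqP E.
have D : mdeg m = (mdeg kk.1 + mdeg kk.2)%N by rewrite -mdegD -E.
case: (ltnP (mdeg kk.1) a) => h1; first by rewrite hp // mul0r.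
rewrite hq ?mulr0 //. move: D lt h1. set x := mdeg m. set y := mdeg kk.1. set z := mdeg kk.2. move=> D lt h1. rewrite D in lt. move: lt h1; clear. move=> lt h1. rewrite -(ltn_add2l y). apply: leq_trans lt _. by rewrite leq_add2r.
Qed.

Lemma lowX e p : low 1 p -> low e (p ^+ e).
Proof.
move=> h; elim: e => [|e IH]; first by move=> m.
by rewrite exprS; apply: (lowM h IH).
Qed.

Lemma lowW D D' p : (D' <= D)%N -> low D p -> low D' p.
Proof. by move=> le h m lt; apply: h; apply: leq_trans lt le. Qed.

Lemma lowD D p q : low D p -> low D q -> low D (p + q).
Proof. by move=> hp hq m lt; rewrite mcoeffD hp ?hq ?addr0. Qed.

Lemma low0 D : low D 0.
Proof. by move=> m _; rewrite mcoeff0. Qed.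

Lemma agree_refl D p : agree D p p. Proof. by []. Qed.
Lemma agree_sym D p q : agree D p q -> agree D q p.
Proof. by move=> h m lt; rewrite h. Qed.
Lemma agree_trans D p q r : agree D p q -> agree D q r -> agree D p r.
Proof. by move=> h1 h2 m lt; rewrite h1 ?h2. Qed.

Lemma agreeM D p p' q q' : agree D p p' -> agree D q q' -> agree D (p * q) (p' * q').
Proof.
move=> hp hq m lt; apply: mcoeffM_local => kk le.
  by apply: hp; apply: leq_ltn_trans lt.
by apply: hq; apply: leq_ltn_trans lt.
Qed.

Lemma agreeD D p p' q q' : agree D p p' -> agree D q q' -> agree D (p + q) (p' + q').
Proof. by move=> hp hq m lt; rewrite !mcoeffD hp ?hq. Qed.

Lemma agreeX D p q e : agree D p q -> agree D (p ^+ e) (q ^+ e).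
Proof.
move=> h; elim: e => [|e IH]; first exact: agree_refl.
by rewrite !exprS; apply: agreeM.
Qed.

Lemma agree_low D p q : low D (p - q) -> agree D p q.
Proof. by move=> h m lt; apply/eqP; rewrite -subr_eq0 -mcoeffB h. Qed.
End Low.

Section Ev.
Variables (R : comNzRingType) (n k : nat).
Definition ev (T : 'I_n -> {mpoly R[k]}) (p : {mpoly R[n]}) : {mpoly R[k]} :=
  mmap (@mpolyC k R) T p.

Lemma mmap1_low (T : 'I_n -> {mpoly R[k]}) :
  (forall i, low 1 (T i)) -> forall j, low (mdeg j) (mmap1 T j).
Proof.
move=> hT j; rewrite /mmap1 mdegE.
elim/big_rec2: _ => [|i a p _ h]; first by move=> m.
by apply: lowM h; apply: lowX.
Qed.

Lemma mmap1_agree D (S T : 'I_n -> {mpoly R[k]}) :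
  (forall i, agree D (S i) (T i)) -> forall j, agree D (mmap1 S j) (mmap1 T j).
Proof.
move=> h j; rewrite /mmap1.
elim/big_rec2: _ => [|i a p _ hh]; first exact: agree_refl.
by apply: agreeM hh; apply: agreeX.
Qed.

Lemma ev_low D T p : (forall i, low 1 (T i)) -> low D p -> low D (ev T p).
Proof.
move=> hT hp; rewrite /ev /mmap big_seq; apply: big_ind.
- exact: low0.
- exact: lowD.
move=> m hm kk lt; rewrite mcoeffCM.
have : (D <= mdeg m)%N.
  rewrite leqNgt; apply/negP => lt2; move: hm; rewrite mcoeff_msupp hp //.
  by rewrite eqxx.
move=> le; have h2 : low (mdeg m) (mmap1 T m) by apply: mmap1_low. by rewrite (lowW le h2) ?mulr0.
Qed.

Lemma ev_agree_p D T p q : (forall i, low 1 (T i)) -> agree D p q -> agree D (ev T p) (ev T q).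
Proof.
move=> hT h; apply: agree_low; rewrite /ev -mmapB; apply: ev_low => //.
by move=> m lt; rewrite mcoeffB h // subrr.
Qed.

Lemma ev_agree_T D S T p : (forall i, agree D (S i) (T i)) -> agree D (ev S p) (ev T p).
Proof.
move=> h; rewrite /ev /mmap; elim/big_rec2: _ => [|m a b _ hh]; first exact: agree_refl.
by apply: agreeD => //; apply: agreeM; [exact: agree_refl | exact: mmap1_agree].
Qed.
End Ev.

Section Subst.
Variables (R : comNzRingType) (n k : nat).

Definition zc k' (f : ps R k') := pscoef f 0%MM = 0.

Lemma trunc_low1 D (f : ps R k) : zc f -> low 1 (pstrunc D f).
Proof.
move=> z m lt; rewrite pstruncE; case: ifP => // _.
by move: lt; rewrite ltnS leqn0 mdeg_eq0 => /eqP ->.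
Qed.

Lemma msize_trunc D (f : ps R n) : (msize (pstrunc D f) <= D)%N.
Proof.
rewrite msizeE big_seq; elim/big_ind: _ => //.
  by move=> x y hx hy; rewrite geq_max hx hy.
move=> m; rewrite mcoeff_msupp pstruncE; case: ifP => //.
by rewrite eqxx.
Qed.

Lemma subst_ev (phi : 'I_n -> ps R k) a m :
  pscoef (ps_subst phi a) m =
  (ev (fun i => pstrunc (mdeg m).+1 (phi i)) (pstrunc (mdeg m).+1 a))@_m.
Proof.
rewrite /ps_subst /= /ev (mmapE (mdeg m).+1) ?msize_trunc //.
congr (mcoeff _ _); apply: eq_bigr => j _.
by rewrite pstruncE bmdeg mul_mpolyC.
Qed.

Variable phi : 'I_n -> ps R k.
Hypothesis hz : forall i, zc (phi i).

Lemma subst_ev_gen a m D : (mdeg m < D)%N ->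
  pscoef (ps_subst phi a) m =
  (ev (fun i => pstrunc D (phi i)) (pstrunc D a))@_m.
Proof.
move=> lt; rewrite subst_ev.
set D0 := (mdeg m).+1.
have le : (D0 <= D)%N by [].
rewrite (@ev_agree_T _ _ _ D0 _ (fun i => pstrunc D (phi i))) //; last first.
  by move=> i kk lk; rewrite !pstruncE lk (leq_trans lk le).
apply: (ev_agree_p (D:=D0)) => //; first by move=> i; apply: trunc_low1.
by move=> kk lk; rewrite !pstruncE lk (leq_trans lk le).
Qed.

Lemma substD a b : ps_subst phi (a + b) = ps_subst phi a + ps_subst phi b.
Proof.
apply: psP => m /=; rewrite -mcoeffD -big_split /=.
by congr (mcoeff _ _); apply: eq_bigr => j _; rewrite scalerDl.
Qed.

Lemma subst0 : ps_subst phi 0 = 0.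
Proof.
apply: psP => m /=; rewrite big1 ?mcoeff0 // => j _; exact: scale0r.
Qed.

Lemma substN a : ps_subst phi (- a) = - ps_subst phi a.
Proof.
by apply/eqP; rewrite -subr_eq0 opprK -substD addNr subst0.
Qed.

Lemma substB a b : ps_subst phi (a - b) = ps_subst phi a - ps_subst phi b.
Proof. by rewrite substD substN. Qed.

Lemma substM a b : ps_subst phi (a * b) = ps_subst phi a * ps_subst phi b.
Proof.
apply: psP => m; set D := (mdeg m).+1.
rewrite (@subst_ev_gen _ _ D) // (@psmulE _ _ _ _ _ D) //.
have hT : forall i, low 1 (pstrunc D (phi i)) by move=> i; apply: trunc_low1.
rewrite (@ev_agree_p _ _ _ D _ _ (pstrunc D a * pstrunc D b)) //; last first.
  by move=> kk lk; rewrite pstrunc_mul.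
rewrite /ev (mmap_is_multiplicative _ _).1.
apply: (agreeM (D:=D)) => // kk lk; rewrite pstruncE lk; by rewrite (subst_ev_gen _ lk).
Qed.

Lemma substX a e : ps_subst phi (a ^+ e) = ps_subst phi a ^+ e.
Proof.
elim: e => [|e IH]; last by rewrite !exprS substM IH.
rewrite !expr0; apply: psP => m; rewrite subst_ev /ev pstrunc1 //.
by rewrite (mmap_is_multiplicative _ _).2 mcoeff1.
Qed.

Lemma subst1 : ps_subst phi 1 = 1.
Proof. by rewrite -(expr0 (0 : ps R n)) substX expr0. Qed.

Lemma trunc_psC D (c : R) : (0 < D)%N -> pstrunc D (psC n c) = c%:MP.
Proof.
move=> D0; apply/mpolyP => m; rewrite pstruncE mcoeffC /=.
case: ifP => [_|/negbT]; first by case: eqP; rewrite ?mulr1 ?mulr0.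
rewrite -leqNgt; case: eqP => [->|]; last by rewrite mulr0.
by rewrite mdeg0 leqn0 => /eqP D00; move: D0; rewrite D00.
Qed.

Lemma substC c : ps_subst phi (psC n c) = psC k c.
Proof.
apply: psP => m; rewrite subst_ev /ev trunc_psC // mmapC mcoeffC /=.
by case: eqP; rewrite ?mulr1 ?mulr0.
Qed.

Lemma trunc_psX D (i : 'I_n) : (1 < D)%N -> pstrunc D (psX i : ps R n) = 'X_i.
Proof.
move=> D1; apply/mpolyP => m; rewrite pstruncE mcoeffX /=.
case: ifP => [_|/negbT]; first by rewrite eq_sym.
rewrite -leqNgt; case: eqP => [<-|]; last by [].
by rewrite mdeg1 => le; move: (leq_trans D1 le).
Qed.

Lemma substXi (i : 'I_n) : ps_subst phi (psX i) = phi i.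
Proof.
apply: psP => m; rewrite (@subst_ev_gen _ _ (mdeg m).+2) //.
rewrite trunc_psX // /ev mmapX mmap1U pstruncE.
by rewrite ltnS leqnSn.
Qed.
End Subst.

Section Coef.
Variables (R : comNzRingType) (n : nat).
Implicit Types (f g : ps R n).

Lemma pscoefD f g m : pscoef (f + g) m = pscoef f m + pscoef g m.
Proof. by []. Qed.
Lemma pscoefN f m : pscoef (- f) m = - pscoef f m.
Proof. by []. Qed.
Lemma pscoefB f g m : pscoef (f - g) m = pscoef f m - pscoef g m.
Proof. by []. Qed.
Lemma pscoef1 m : pscoef (1 : ps R n) m = (m == 0%MM)%:R.
Proof. by []. Qed.

Lemma coefCM c f m : pscoef (psC n c * f) m = c * pscoef f m.
Proof.
rewrite (@psmulE _ _ _ _ _ (mdeg m).+1) // trunc_psC // mcoeffCM pstruncE.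
by rewrite ltnSn.
Qed.

Lemma coef0M f g : pscoef (f * g) 0%MM = pscoef f 0%MM * pscoef g 0%MM.
Proof.
have E h : pstrunc 1 h = (pscoef h 0%MM)%:MP.
  apply/mpolyP => m; rewrite pstruncE mcoeffC ltnS leqn0 mdeg_eq0.
  by case: eqP => [->|]; rewrite ?mulr1 ?mulr0.
rewrite (@psmulE _ _ _ _ _ 1) ?mdeg0 // !E -mpolyCM mcoeffC eqxx mulr1. by [].
Qed.

Lemma coefXM (i : 'I_n) f m : pscoef (psX i * f) m =
  if (0 < m i)%N then pscoef f (m - U_(i))%MM else 0.
Proof.
rewrite (@psmulE _ _ _ _ _ (mdeg m).+2) // trunc_psX //.
case: ifP => [mi|mi].
  have Em : m = (U_(i) + (m - U_(i)))%MM.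
    apply/mnmP => j; rewrite mnmDE mnmBE mnm1E.
    by case: eqP => [<-|] /=; [rewrite subnKC | rewrite subn0].
  rewrite [in LHS]Em mulrC mcoeffMX pstruncE.
  by rewrite (leq_ltn_trans (mdegB _ _)) // -Em ltnW.
rewrite mcoeffM big1 // => kk /eqP E; rewrite mcoeffX.
case: eqP => [E1|]; last by rewrite mul0r.
have : (m i = kk.1 i + kk.2 i)%N by rewrite -mnmDE -E. by rewrite -E1 mnm1E eqxx => h; move: mi; rewrite h.
Qed.
End Coef.

Section OneVar.
Variables (R : comNzRingType) (v : R).
Let t : ps R 1 := psX ord0.

Lemma mdeg1var (m : 'X_{1..1}) : mdeg m = m ord0.
Proof. by rewrite mdegE big_ord1. Qed.

Lemma eqU1var (m : 'X_{1..1}) : (m == U_(ord0))%MM = (m ord0 == 1%N).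
Proof.
apply/eqP/eqP => [->|h]; first by rewrite mnm1E.
by apply/mnmP => j; rewrite ord1 mnm1E h.
Qed.

Lemma chi_id : fgl_inv_series v * (1 - psC 1 v * t) = - t.
Proof.
have -> : fgl_inv_series v * (1 - psC 1 v * t) =
  fgl_inv_series v - psC 1 v * (t * fgl_inv_series v) by ring.
apply: psP => m; rewrite !pscoefB pscoefN coefCM /t coefXM /= !mdeg1var.
rewrite mnmBE mnm1E eqxx eqU1var.
case: (m ord0) => [|[|j]] /=; rewrite ?mulr0 ?subr0 ?oppr0 ?expr0 //. by rewrite exprS mulrN opprK addrC subrr.
Qed.

Definition geo : ps R 1 := PS (fun m => v ^+ mdeg m).

Lemma geo_id : geo * (1 - psC 1 v * t) = 1.
Proof.
have -> : geo * (1 - psC 1 v * t) = geo - psC 1 v * (t * geo) by ring.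
apply: psP => m; rewrite !pscoefB coefCM /t coefXM /= !mdeg1var.
rewrite mnmBE mnm1E eqxx -mdeg_eq0 mdeg1var.
case: (m ord0) => [|j] /=; rewrite ?mulr0 ?subr0 //.
by rewrite subn1 /= exprS subrr.
Qed.
End OneVar.

Section Inv.
Variables (R : comNzRingType) (v : R) (n : nat) (y : ps R n).
Hypothesis zy : zc y.

Lemma fgl_inv_id : fgl_inv v y * (1 - psC n v * y) = - y.
Proof.
have hz : forall i : 'I_1, zc ((fun _ => y) i) by [].
have := congr1 (ps_subst (fun _ : 'I_1 => y)) (chi_id v).
by rewrite substM // substB // subst1 // substM // substC substN // !substXi.
Qed.

Lemma unit_1v : exists iota, (1 - psC n v * y) * iota = 1.
Proof.
have hz : forall i : 'I_1, zc ((fun _ => y) i) by [].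
exists (ps_subst (fun _ => y) (geo v)).
have := congr1 (ps_subst (fun _ : 'I_1 => y)) (geo_id v).
by rewrite substM // substB // subst1 // substM // substC !substXi // mulrC.
Qed.
End Inv.

Section Ideal.
Variables (R : comNzRingType) (n : nat) (cones : {set {set 'I_n}}).
Implicit Types (f g h : ps R n).

Lemma in_ideal0 : in_ideal cones (0 : ps R n).
Proof. by exists (fun _ => 0); rewrite big1 // => S _; rewrite mul0r. Qed.

Lemma in_idealD f g : in_ideal cones f -> in_ideal cones g -> in_ideal cones (f + g).
Proof.
case=> c1 -> [c2 ->]; exists (fun S => c1 S + c2 S).
by rewrite -big_split; apply: eq_bigr => S _; rewrite mulrDl.
Qed.

Lemma in_idealM h f : in_ideal cones f -> in_ideal cones (h * f).
Proof.
case=> c ->; exists (fun S => h * c S).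
by rewrite mulr_sumr; apply: eq_bigr => S _; rewrite mulrA.
Qed.

Lemma in_idealN f : in_ideal cones f -> in_ideal cones (- f).
Proof. by move=> hf; rewrite -mulN1r; apply: in_idealM. Qed.

Lemma in_ideal_nonface S g : nonface cones S ->
  in_ideal cones (g * \prod_(i in S) psX i).
Proof.
move=> nf; exists (fun S' => if S' == S then g else 0).
rewrite (bigD1 S) //= eqxx [X in _ + X]big1 ?addr0 // => S' /andP [_ /negbTE ->].
by rewrite mul0r.
Qed.

Lemma eqmod_refl f : eqmod cones f f.
Proof. by rewrite /eqmod subrr; apply: in_ideal0. Qed.

Lemma eqmod_sym f g : eqmod cones f g -> eqmod cones g f.
Proof. by rewrite /eqmod => h; rewrite -opprB; apply: in_idealN. Qed.

Lemma eqmod_trans f g h : eqmod cones f g -> eqmod cones g h -> eqmod cones f h.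
Proof.
rewrite /eqmod => h1 h2; have := in_idealD h1 h2.
by rewrite addrA subrK.
Qed.

Lemma eqmodD f f' g g' : eqmod cones f f' -> eqmod cones g g' ->
  eqmod cones (f + g) (f' + g').
Proof.
rewrite /eqmod => h1 h2; have := in_idealD h1 h2.
by rewrite opprD addrACA.
Qed.

Lemma eqmodN f f' : eqmod cones f f' -> eqmod cones (- f) (- f').
Proof. by rewrite /eqmod => h; rewrite -opprD; apply: in_idealN. Qed.

Lemma eqmodB f f' g g' : eqmod cones f f' -> eqmod cones g g' ->
  eqmod cones (f - g) (f' - g').
Proof. by move=> h1 h2; apply: eqmodD => //; apply: eqmodN. Qed.

Lemma eqmodMl h f f' : eqmod cones f f' -> eqmod cones (h * f) (h * f').
Proof. by rewrite /eqmod => h1; rewrite -mulrBr; apply: in_idealM. Qed.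

Lemma eqmodM f f' g g' : eqmod cones f f' -> eqmod cones g g' ->
  eqmod cones (f * g) (f' * g').
Proof.
move=> h1 h2; apply: (@eqmod_trans _ (f * g')); first exact: eqmodMl.
by rewrite ![_ * g']mulrC; apply: eqmodMl.
Qed.

Lemma eqmodX f f' e : eqmod cones f f' -> eqmod cones (f ^+ e) (f' ^+ e).
Proof.
move=> h; elim: e => [|e IH]; first exact: eqmod_refl.
by rewrite !exprS; apply: eqmodM.
Qed.

Lemma eqmod_rw f f' g g' : f = f' -> g = g' -> eqmod cones f g -> eqmod cones f' g'.
Proof. by move=> -> ->. Qed.

Lemma eqmod_eq f g : f = g -> eqmod cones f g.
Proof. by move=> ->; apply: eqmod_refl. Qed.
End Ideal.

Section Sums.
Variables (T : comNzRingType) (c X Y : T).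
Definition S1 n := \sum_(1 <= i < n.+1) X ^+ (n.+1 - i) * Y ^+ i.
Definition S2 n := \sum_(1 <= i < n) X ^+ (n - i) * Y ^+ i.
Definition Pn n := c * S1 n - S2 n.

Lemma S1S n : S1 n.+1 = X * S1 n + X * Y ^+ n.+1.
Proof.
rewrite /S1 big_nat_recr //= subSnn expr1 mulr_sumr; congr (_ + _).
apply: eq_big_nat => i /andP [_ lt]; by rewrite (subSn (ltnW lt)) exprS mulrA.
Qed.

Lemma S2S n : (1 <= n)%N -> S2 n.+1 = X * S2 n + X * Y ^+ n.
Proof.
move=> n1; rewrite /S2 big_nat_recr //= subSnn expr1 mulr_sumr; congr (_ + _).
apply: eq_big_nat => i /andP [_ lt]; rewrite subSn ?(ltnW lt) // exprS mulrA //.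
Qed.

Lemma PnS n : (1 <= n)%N -> Pn n.+1 = X * Pn n - X * Y ^+ n + c * X * Y ^+ n.+1.
Proof.
move=> n1; rewrite /Pn S1S S2S //.
set u := Y ^+ n.+1; set w := Y ^+ n; ring.
Qed.

Lemma Pn1 : Pn 1 = c * X * Y.
Proof. by rewrite /Pn /S1 /S2 big_nat1 big_geq // subr0 subSnn !expr1 mulrA. Qed.
End Sums.

Section Main.
Variables (R : comNzRingType) (v : R) (N : nat) (cones : {set {set 'I_N}}).
Variables (a b : 'I_N) (sigma : {set 'I_N}) (pf : ps R N.+1 -> ps R N).
Hypothesis ab : a != b.
Hypothesis hsig : sigma = [set a; b].
Let cones' := star_cones cones sigma.
Hypothesis hpf : forall f g, eqmod cones' f g -> eqmod cones (pf f) (pf g).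
Hypothesis hadd : forall f g, eqmod cones (pf (f + g)) (pf f + pf g).
Hypothesis hmod : forall c f, eqmod cones (pf (pullback v sigma c * f)) (c * pf f).
Hypothesis h1 : eqmod cones (pf 1) 1.
Hypothesis hX : forall i : 'I_N, eqmod cones (pf (psX (old_ray i))) (psX i).

Let o (i : 'I_N) : ps R N.+1 := psX (old_ray i).
Let e : ps R N.+1 := psX (new_ray N).
Let x (i : 'I_N) : ps R N := psX i.

Lemma old_inj : injective (@old_ray N).
Proof. by move=> i j /(congr1 val) /= /val_inj. Qed.

Lemma nf : nonface cones' [set old_ray a; old_ray b].
Proof.
apply/forallP => th'; apply/implyP => hth'; apply/negP => sub.
have [ha hb] : old_ray a \in th' /\ old_ray b \in th'.
  by split; apply: (subsetP sub); rewrite !inE eqxx ?orbT.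
rewrite inE in hth'; case/existsP: hth' => th /andP [thc /orP [/andP [nsub /eqP E] | /and3P [ssub _ nsub]]].
  case/negP: nsub; rewrite hsig; apply/subsetP => y /set2P [->|->].
    by move: ha; rewrite E => /imsetP [z zin /old_inj ->].
  by move: hb; rewrite E => /imsetP [z zin /old_inj ->].
case/negP: nsub; apply/subsetP => y /imsetP [z]; rewrite hsig.
by move=> /set2P [->|->] ->.
Qed.

Lemma prod2 : \prod_(i in [set old_ray a; old_ray b]) psX i = o a * o b :> ps R N.+1.
Proof.
rewrite big_setU1 /= ?big_set1 //.
by rewrite inE; apply/negP => /eqP /old_inj /eqP; apply/negP.
Qed.

Lemma kill f g : eqmod cones' (o a * (f + o b * g)) (o a * f).
Proof.
rewrite /eqmod.
have -> : o a * (f + o b * g) - o a * f = g * (o a * o b) by ring.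
rewrite -prod2; exact: in_ideal_nonface nf.
Qed.

Lemma zcX k (j : 'I_k) : zc (psX j : ps R k).
Proof.
rewrite /zc /=; case: eqP => // /(congr1 mdeg); rewrite mdeg0 mdeg1 //.
Qed.

Lemma zc_fgl k (f g : ps R k) : zc f -> zc g -> zc (fgl_add v f g).
Proof.
rewrite /zc /fgl_add => hf hg; rewrite pscoefB pscoefD !coef0M hf hg.
by rewrite !mulr0 subr0 addr0.
Qed.

Let phi := fun i : 'I_N => if i \in sigma then fgl_add v (psX (old_ray i)) (psX (new_ray N))
                          else psX (old_ray i).

Lemma zc_phi : forall i, zc (phi i).
Proof. by move=> i; rewrite /phi; case: ifP => _; [apply: zc_fgl|]; apply: zcX. Qed.

Let P := pullback v sigma.
Lemma PM f g : P (f * g) = P f * P g. Proof. exact: substM zc_phi f g. Qed.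
Lemma PD f g : P (f + g) = P f + P g. Proof. exact: substD. Qed.
Lemma PB f g : P (f - g) = P f - P g. Proof. exact: substB. Qed.
Lemma PN f : P (- f) = - P f. Proof. exact: substN. Qed.
Lemma PXn f t : P (f ^+ t) = P f ^+ t. Proof. exact: substX zc_phi f t. Qed.
Lemma PC c : P (psC N c) = psC N.+1 c. Proof. exact: substC. Qed.
Lemma P1 : P 1 = 1. Proof. exact: subst1 zc_phi. Qed.

Let y (i : 'I_N) : ps R N.+1 := o i + e - psC N.+1 v * o i * e.

Lemma Px i : i \in sigma -> P (x i) = y i.
Proof. by move=> hi; rewrite /P /pullback (substXi zc_phi) /phi hi. Qed.

Lemma asig : a \in sigma. Proof. by rewrite hsig !inE eqxx. Qed.
Lemma bsig : b \in sigma. Proof. by rewrite hsig !inE eqxx orbT. Qed.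

Lemma K1 : eqmod cones' (o a * y b) (o a * e).
Proof.
have -> : o a * y b = o a * (e + o b * (1 - psC N.+1 v * e)) by rewrite /y; ring.
exact: kill.
Qed.

Lemma K2 t : eqmod cones' (o a * y b ^+ t) (o a * e ^+ t).
Proof.
elim: t => [|t IH]; first exact: eqmod_refl.
rewrite !exprSr !mulrA.
apply: (@eqmod_trans _ _ _ _ (o a * e ^+ t * y b)); first exact: eqmodM IH (eqmod_refl _ _).
have -> : o a * e ^+ t * y b = e ^+ t * (o a * y b) by ring.
have -> : o a * e ^+ t * e = e ^+ t * (o a * e) by ring.
by apply: eqmodMl; apply: K1.
Qed.

Lemma K3 t : eqmod cones (pf (o a * e ^+ t)) (x a * x b ^+ t).
Proof.
apply: (@eqmod_trans _ _ _ _ (pf (P (x b ^+ t) * o a))).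
  apply: hpf; rewrite PXn Px ?bsig //; apply: eqmod_sym; rewrite mulrC; exact: K2.
apply: eqmod_trans (hmod _ _) _; rewrite mulrC; apply: eqmodM (hX a) (eqmod_refl _ _).
Qed.

Lemma Pfgl f g : P (fgl_add v f g) = fgl_add v (P f) (P g).
Proof. by rewrite /fgl_add PB PD !PM PC. Qed.

Let w := P (fgl_inv v (x b)).

Lemma w_id : w * (1 - psC N.+1 v * y b) = - y b.
Proof.
have := congr1 P (fgl_inv_id v (zcX b)).
by rewrite PM PB P1 PM PC PN Px ?bsig.
Qed.

Lemma K4a : exists c, c * (1 - psC N.+1 v * e) = - e /\ eqmod cones' (o a * w) (o a * c).
Proof.
have [iota hi] := unit_1v v (zcX (new_ray N) : zc e).
exists (- e * iota); split.
  by rewrite -mulrA [iota * _]mulrC hi mulr1.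
have hK : eqmod cones' (o a * (1 - psC N.+1 v * y b)) (o a * (1 - psC N.+1 v * e)).
  have -> : o a * (1 - psC N.+1 v * y b) = o a - psC N.+1 v * (o a * y b) by ring.
  have -> : o a * (1 - psC N.+1 v * e) = o a - psC N.+1 v * (o a * e) by ring.
  by apply: eqmodB (eqmod_refl _ _) (eqmodMl _ K1).
have -> : o a * w = w * (o a * (1 - psC N.+1 v * e)) * iota.
  by rewrite -mulrA -mulrA hi; ring.
apply: (@eqmod_trans _ _ _ _ (w * (o a * (1 - psC N.+1 v * y b)) * iota)).
  by apply: eqmodM (eqmod_refl _ _); apply: eqmodMl; apply: eqmod_sym.
have -> : w * (o a * (1 - psC N.+1 v * y b)) * iota = - (o a * y b) * iota.
  by rewrite mulrCA w_id; ring.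
have -> : o a * (- e * iota) = - (o a * e) * iota by ring.
by apply: eqmodM (eqmod_refl _ _); apply: eqmodN; apply: K1.
Qed.

Let g := fgl_sub v (x a) (x b).

Lemma K4b : eqmod cones' (o a * P g) (o a * o a).
Proof.
have [c [hc hw]] := K4a.
rewrite /g /fgl_sub Pfgl Px ?asig // -/w.
have -> : o a * fgl_add v (y a) w = o a * y a + (o a * w) * (1 - psC N.+1 v * y a).
  by rewrite /fgl_add; ring.
apply: (@eqmod_trans _ _ _ _ (o a * y a + (o a * c) * (1 - psC N.+1 v * y a))).
  by apply: eqmodD (eqmod_refl _ _) _; apply: eqmodM hw (eqmod_refl _ _).
apply: eqmod_eq.
have -> : o a * y a + o a * c * (1 - psC N.+1 v * y a) =
  o a * (o a + e * (1 - psC N.+1 v * o a) + (1 - psC N.+1 v * o a) * (c * (1 - psC N.+1 v * e))).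
  by rewrite /y; ring.
by rewrite hc; ring.
Qed.

Lemma K4 k : eqmod cones' (o a * P g ^+ k) (o a ^+ k.+1).
Proof.
elim: k => [|k IH]; first by rewrite expr0 expr1 mulr1; apply: eqmod_refl.
rewrite exprS mulrCA.
apply: (@eqmod_trans _ _ _ _ (P g * o a ^+ k.+1)); first exact: eqmodMl.
rewrite !exprS; set z := o a ^+ k.
have -> : P g * (o a * z) = z * (o a * P g) by ring.
have -> : o a * (o a * z) = z * (o a * o a) by ring.
exact: eqmodMl K4b.
Qed.

Lemma K5 s t : eqmod cones (pf (o a ^+ s.+1 * e ^+ t)) (x a * x b ^+ t * g ^+ s).
Proof.
have E : eqmod cones' (o a ^+ s.+1 * e ^+ t) (P (x b ^+ t * g ^+ s) * o a).
  rewrite PM !PXn Px ?bsig //.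
  apply: eqmod_sym.
  have -> : y b ^+ t * P g ^+ s * o a = (o a * y b ^+ t) * P g ^+ s by ring.
  apply: (@eqmod_trans _ _ _ _ ((o a * e ^+ t) * P g ^+ s)).
    by apply: eqmodM (eqmod_refl _ _); apply: K2.
  have -> : o a * e ^+ t * P g ^+ s = e ^+ t * (o a * P g ^+ s) by ring.
  have -> : o a ^+ s.+1 * e ^+ t = e ^+ t * o a ^+ s.+1 by ring.
  by apply: eqmodMl; apply: K4.
apply: eqmod_trans (hpf E) _; apply: eqmod_trans (hmod _ _) _.
have -> : x a * x b ^+ t * g ^+ s = x b ^+ t * g ^+ s * x a by ring.
by apply: eqmodMl; apply: hX.
Qed.

Lemma pfB f h : eqmod cones (pf (f - h)) (pf f - pf h).
Proof.
have := hadd (f - h) h; rewrite subrK => H.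
apply: (@eqmod_trans _ _ _ _ (pf (f - h) + pf h - pf h)).
  by apply: eqmod_eq; rewrite addrK.
by apply: eqmodB (eqmod_sym H) (eqmod_refl _ _).
Qed.

Lemma pfC c f : eqmod cones (pf (psC N.+1 c * f)) (psC N c * pf f).
Proof. by rewrite -PC; apply: hmod. Qed.

Lemma R1 n : eqmod cones (pf (e ^+ n.+1))
  (x a * pf (e ^+ n) - x a * x b ^+ n + psC N v * x a * x b ^+ n.+1).
Proof.
have HA : eqmod cones (pf (y a * e ^+ n)) (x a * pf (e ^+ n)).
  by rewrite -Px ?asig //; apply: hmod.
have E : y a * e ^+ n = (o a * e ^+ n + e ^+ n.+1) - psC N.+1 v * (o a * e ^+ n.+1).
  by rewrite /y !exprS; ring.
have HB : eqmod cones (pf (y a * e ^+ n))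
   ((x a * x b ^+ n + pf (e ^+ n.+1)) - psC N v * (x a * x b ^+ n.+1)).
  rewrite E; apply: eqmod_trans (pfB _ _) _; apply: eqmodB.
    by apply: eqmod_trans (hadd _ _) _; apply: eqmodD (K3 n) (eqmod_refl _ _).
  by apply: eqmod_trans (pfC _ _) _; apply: eqmodMl; apply: K3.
have H := eqmod_trans (eqmod_sym HA) HB.
set Z := - (x a * x b ^+ n) + psC N v * (x a * x b ^+ n.+1).
have H2 := eqmodD (eqmod_sym H) (eqmod_refl cones Z).
apply: (eqmod_rw _ _ H2); rewrite /Z; ring.
Qed.

Lemma Part1 : eqmod cones (pf e) (psC N v * x a * x b).
Proof.
have H := R1 0; rewrite expr1 expr0 in H.
apply: eqmod_trans H _.
have H' := eqmodB (eqmodD (eqmodMl (x a) h1) (eqmod_refl cones (- (x a * 1))))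
  (eqmod_refl cones (- (psC N v * x a * x b ^+ 1))).
apply: (eqmod_rw _ _ H'); rewrite ?expr1 ?expr0; ring.
Qed.

Lemma Part2 n : (1 <= n)%N -> eqmod cones (pf (e ^+ n)) (Pn (psC N v) (x a) (x b) n).
Proof.
case: n => // n _; elim: n => [|n IH].
  by rewrite Pn1 expr1; apply: Part1.
apply: eqmod_trans (R1 _) _; rewrite PnS //.
apply: eqmodD; last exact: eqmod_refl. apply: eqmodB; last exact: eqmod_refl. exact: eqmodMl.
Qed.
End Main.

Theorem theorem5p1 (R : comNzRingType) (v : R) (d N : nat)
  (vr : 'I_N -> 'rV[int]_d) (cones : {set {set 'I_N}}) (rho1 rho2 : 'I_N)
  (pf : ps R N.+1 -> ps R N) :
  smooth_fan vr cones ->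
  rho1 != rho2 -> [set rho1; rho2] \in cones ->
  let sigma := [set rho1; rho2] in
  let cones' := star_cones cones sigma in
  let xE := psX (new_ray N) in
  (* pf represents a well-defined map R[[CDiv_T(X')]]_F / I_Sigma' -> R[[CDiv_T(X)]]_F / I_Sigma *)
  (forall f g, eqmod cones' f g -> eqmod cones (pf f) (pf g)) ->
  (* ... which is a module homomorphism, the source being a module via pi^* *)
  (forall f g, eqmod cones (pf (f + g)) (pf f + pf g)) ->
  (forall a f, eqmod cones (pf (pullback v sigma a * f)) (a * pf f)) ->
  (* pi_*(1) = 1 and pi_*(x_{D_rho,Sigma'}) = x_{D_rho,Sigma} *)
  eqmod cones (pf 1) 1 ->
  (forall i : 'I_N, eqmod cones (pf (psX (old_ray i))) (psX i)) ->
  let x1 := psX rho1 in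
  let x2 := psX rho2 in
  [/\ eqmod cones (pf xE) (psC N v * x1 * x2),
      forall n : nat, (2 <= n)%N ->
        eqmod cones (pf (xE ^+ n))
          (psC N v * (\sum_(1 <= i < n.+1) x1 ^+ (n.+1 - i) * x2 ^+ i)
           - \sum_(1 <= i < n) x1 ^+ (n - i) * x2 ^+ i)
    & forall a b : 'I_N, (a, b) = (rho1, rho2) \/ (a, b) = (rho2, rho1) ->
        forall s t : nat, (1 <= s)%N ->
        eqmod cones (pf (psX (old_ray a) ^+ s * xE ^+ t))
          (psX a * psX b ^+ t * fgl_sub v (psX a) (psX b) ^+ (s - 1))].
Proof.
move=> _ hne _ sigma cones' xE hpf hadd hmod h1 hX x1 x2.
have hs : sigma = [set rho1; rho2] by [].
have hs' : sigma = [set rho2; rho1] by rewrite /sigma setUC.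
split.
- exact: (Part1 hne hs hpf hadd hmod h1 hX).
- move=> n n2; exact: (Part2 hne hs hpf hadd hmod h1 hX (ltnW n2)).
move=> a b hab s t; case: s => // s _; rewrite subSS subn0.
case: hab => [[-> ->]|[-> ->]].
  exact: (K5 hne hs hpf hmod hX).
by apply: (K5 _ hs' hpf hmod hX); rewrite eq_sym.
Qed.
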